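(* Let $S$ be a finitely generated semigroup and let $S_+$ denote the set of non-invertible elements of $S$. Let $T=\bigcup_{i=1}^kS\bullet t_i$ be a finitely generated $S$-module such that $s\bullet t=t$ (with $s\in S$, $t\in T$) occurs only when $s$ is a unit of $S$. Then the set $T_{\mathrm{prim}}:=T\smallsetminus(S_+\bullet T)$ is finite and generates $T$ over $S$.
   Context: Semigroups are commutative monoids (written additively, with identity $0$) that are subsemigroups of finitely generated abelian groups such that their image in the torsion-free quotient of the ambient group is pointed (has no nonzero units). An $S$-module is a set $T$ with an action $\bullet\colon S\times T\to T$ satisfying $(s+s')\bullet t=s\bullet(s'\bullet t)$ and $0\bullet t=t$. $T$ is finitely generated over $S$ if $T=\bigcup_{i=1}^kS\bullet t_i$ for finitely many $t_i\in T$; a subset generates $T$ if $T$ is the union of the orbits $S\bullet t$ over its elements. $S_+\bullet T=\{s\bullet t\mid s\in S_+, t\in T\}$. *)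

(* Defs.v *)
From mathcomp Require Import all_boot all_order all_algebra.
From Stdlib Require List.
Set Implicit Arguments. Unset Strict Implicit. Unset Printing Implicit Defensive.
Import GRing.Theory.
Local Open Scope ring_scope.

Definition fg_abgroup (G : zmodType) : Prop :=
  exists gens : seq G, forall g : G,
    exists c : nat -> int, g = \sum_(i < size gens) gens`_i *~ c i.

Definition torsion (G : zmodType) (x : G) : Prop :=
  exists n : nat, (0 < n)%N /\ x *+ n = 0.

Definition submonoid (G : zmodType) (S : G -> Prop) : Prop :=
  S 0 /\ forall x y, S x -> S y -> S (x + y).

(* The image of S in the torsion-free quotient G / tors(G) is pointed:
   if [x] + [y] = 0 with x, y in S, then [x] = 0. *)
Definition pointed_mod_torsion (G : zmodType) (S : G -> Prop) : Prop :=
  forall x y, S x -> S y -> torsion (x + y) -> torsion x.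

Definition is_semigroup (G : zmodType) (S : G -> Prop) : Prop :=
  fg_abgroup G /\ submonoid S /\ pointed_mod_torsion S.

Definition fg_semigroup (G : zmodType) (S : G -> Prop) : Prop :=
  exists gens : seq G, (forall i, (i < size gens)%N -> S gens`_i) /\
    forall s, S s -> exists c : nat -> nat, s = \sum_(i < size gens) gens`_i *+ c i.

Definition unit_of (G : zmodType) (S : G -> Prop) (s : G) : Prop :=
  S s /\ exists s', S s' /\ s + s' = 0.

Definition S_plus (G : zmodType) (S : G -> Prop) (s : G) : Prop :=
  S s /\ ~ unit_of S s.

(* an S-module structure on T given by act (only its values on S matter) *)
Definition is_module (G : zmodType) (S : G -> Prop) (T : Type)
    (act : G -> T -> T) : Prop :=
  (forall s s' t, S s -> S s' -> act (s + s') t = act s (act s' t)) /\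
  (forall t, act 0 t = t).

Definition generates (G : zmodType) (S : G -> Prop) (T : Type)
    (act : G -> T -> T) (P : T -> Prop) : Prop :=
  forall t, exists p s, P p /\ S s /\ t = act s p.

Definition fg_module (G : zmodType) (S : G -> Prop) (T : Type)
    (act : G -> T -> T) : Prop :=
  exists ts : seq T, generates S act (fun t => Stdlib.Lists.List.In t ts).

Definition T_prim (G : zmodType) (S : G -> Prop) (T : Type)
    (act : G -> T -> T) (t : T) : Prop :=
  ~ exists s t', S_plus S s /\ t = act s t'.

Definition finite_set (T : Type) (P : T -> Prop) : Prop :=
  exists l : seq T, forall t, P t -> Stdlib.Lists.List.In t l.

(* Main.v *)
Require Import Defs.
From mathcomp Require Import all_boot all_order all_algebra.
From Stdlib Require List.
From Stdlib Require Import Classical ClassicalEpsilon Lia.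
Set Implicit Arguments. Unset Strict Implicit. Unset Printing Implicit Defensive.
Import GRing.Theory.
Local Open Scope ring_scope.

Lemma S_sum (G : zmodType) (S : G -> Prop) : submonoid S ->
  forall (I : Type) (r : seq I) (P : pred I) (F : I -> G),
  (forall i, P i -> S (F i)) -> S (\sum_(i <- r | P i) F i).
Proof. move=> [S0 SD] I r P F HF; apply: big_ind => //. Qed.

Lemma S_muln (G : zmodType) (S : G -> Prop) (x : G) (n : nat) : submonoid S ->
  S x -> S (x *+ n).
Proof.
move=> [S0 SD] Sx; elim: n => [|n IH]; first by rewrite mulr0n.
by rewrite mulrS; apply: (SD).
Qed.

Lemma splus_add (G : zmodType) (S : G -> Prop) (a b : G) : submonoid S ->
  S_plus S a -> S b -> S_plus S (a + b).
Proof.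
move=> [S0 SD] [Sa Nua] Sb; split; first by apply: (SD).
move=> [_ [w [Sw Hw]]]; apply: Nua; split => //.
exists (b + w); split; [by apply: (SD) | by rewrite addrA].
Qed.

Lemma inseqIn (T : eqType) (x : T) (s : seq T) : x \in s -> List.In x s.
Proof.
elim: s => [//|y s IH]; rewrite inE => /orP [/eqP ->|H]; [by left | right; auto].
Qed.

Lemma common_order (G : zmodType) (gens : seq G) (P : G -> Prop) :
  (forall g, P g -> torsion g) -> exists N, (0 < N)%N /\
  forall i, (i < size gens)%N -> P gens`_i -> gens`_i *+ N = 0.
Proof.
move=> Ht; elim: gens => [|g gs [N [N0 HN]]].
  by exists 1%N; split => //.
case: (classic (P g)) => Pg.
  have [n [n0 Hn]] := Ht g Pg.
  exists (N * n)%N; split; first by rewrite muln_gt0 N0 n0.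
  case => [|i] /= Hi Pi.
    by rewrite mulnC mulrnA Hn mul0rn.
  by rewrite mulrnA HN // mul0rn.
exists N; split => //; case => [|i] /= Hi Pi; first by [].
by apply: HN.
Qed.

Lemma units_finite (G : zmodType) (S : G -> Prop) :
  is_semigroup S -> fg_semigroup S ->
  exists Ul : seq G, forall u, unit_of S u -> List.In u Ul.
Proof.
move=> [_ [Hsm Hpt]] [gens [Hg Hgen]].
have [S0 SD] := Hsm.
have Htor : forall g, unit_of S g -> torsion g.
  move=> g [Sg [g' [Sg' Hgg]]]; apply: (Hpt g g') => //.
  by exists 1%N; rewrite Hgg mulr1n.
have [N [N0 HN]] := common_order gens Htor.
set m := size gens.
exists [seq \sum_(i < m) gens`_i *+ (d i : nat) | d : {ffun 'I_m -> 'I_N} <- enum {ffun 'I_m -> 'I_N}].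
move=> u Hu; have [Su [u' [Su' Hu']]] := Hu.
have [c Hc] := Hgen u Su.
apply: inseqIn; apply/mapP.
exists [ffun i : 'I_m => Ordinal (ltn_pmod (c i) N0)]; first by rewrite mem_enum.
rewrite Hc; apply: eq_bigr => i _; rewrite ffunE /=.
case: (posnP (c i)) => [->|ci0]; first by rewrite mod0n.
have Ug : unit_of S gens`_i.
  split; first by apply: (Hg); exact: ltn_ord.
  exists (gens`_i *+ (c i).-1 + \sum_(j < m | j != i) gens`_j *+ c j + u').
  split.
    apply: (SD) => //; apply: (SD); first by apply: S_muln => //; apply: (Hg); exact: ltn_ord.
    by apply: S_sum => // j _; apply: S_muln => //; apply: (Hg); exact: ltn_ord.
  have Hu2 : u = gens`_i *+ c i + \sum_(j < m | j != i) gens`_j *+ c j.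
    by rewrite Hc (bigD1 i).
  have Hgi : gens`_i *+ c i = gens`_i + gens`_i *+ (c i).-1.
    by rewrite -mulrS prednK.
  by rewrite !addrA -Hgi -Hu2.
rewrite {1}(divn_eq (c i) N) (mulnC (c i %/ N)%N) mulrnDr mulrnA HN //.
  by rewrite mul0rn add0r.
Qed.

Theorem lemma4p2 (G : zmodType) (S : G -> Prop) (T : Type) (act : G -> T -> T) :
  is_semigroup S -> fg_semigroup S ->
  is_module S act -> fg_module S act ->
  (forall s t, S s -> act s t = t -> unit_of S s) ->
  finite_set (T_prim S act) /\ generates S act (T_prim S act).
Proof.
move=> Hsg Hfg [Hact Hact0] [ts Hts] Hfix.
have [_ [Hsm Hpt]] := Hsg.
have [S0 SD] := Hsm.
have [Ul HUl] := units_finite Hsg Hfg.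
split.
  exists (List.flat_map (fun t => List.map (fun u => act u t) Ul) ts).
  move=> t Ht; have [p [s [Hp [Ss Ht']]]] := Hts t; subst t.
  apply/List.in_flat_map; exists p; split => //.
  apply: List.in_map; apply: HUl; apply: NNPP => Hnu.
  by apply: Ht; exists s, p; split.
pose R a b := List.In b ts /\ exists σ, S_plus S σ /\ a = act σ b.
have eqd : forall x y : T, {x = y} + {x <> y}.
  by move=> x y; apply: excluded_middle_informative.
have claim : forall n a (L : list T), (length L <= n)%coq_nat ->
    (forall b, R a b -> List.In b L) ->
    exists m σ, T_prim S act m /\ S σ /\ a = act σ m.
  elim => [|n IH] a L HL HR.
  - case: (classic (exists b, R a b)) => [[b Hb]|Hno].
      by have := HR b Hb; case: L HL HR => //= x L' HL; lia.
    exists a, 0; split; last by rewrite Hact0.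
    move=> [s [t' [Hs Ha]]]; have [p [s' [Hp [Ss' Ht']]]] := Hts t'.
    apply: Hno; exists p; split => //; exists (s + s'); split.
      exact: splus_add.
    by rewrite Hact //; [rewrite -Ht' | case: Hs].
  - case: (classic (exists b, R a b)) => [[b Hb]|Hno].
      have Hbin := HR b Hb.
      have [_ [σ [Hσ Hab]]] := Hb.
      have := IH b (List.remove eqd b L).
      case.
      + have := List.remove_length_lt eqd L b Hbin; lia.
      + move=> c [Hc [τ [Hτ Hbc]]].
        apply: List.in_in_remove.
          move=> Ecb; subst c.
          have [_ Hnu] := Hτ; apply: Hnu; apply: (Hfix τ b).
            by case: Hτ.
          by rewrite -Hbc.
        apply: HR; split => //; exists (σ + τ); split.
          by apply: splus_add => //; case: Hτ.
        by rewrite Hact; [rewrite -Hbc | case: Hσ | case: Hτ].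
      + move=> m [ρ [Hm [Sρ Hb']]].
        exists m, (σ + ρ); split => //; split; first by apply: (SD) => //; case: Hσ.
        by rewrite Hact //; [rewrite -Hb' | case: Hσ].
    exists a, 0; split; last by rewrite Hact0.
    move=> [s [t' [Hs Ha]]]; have [p [s' [Hp [Ss' Ht']]]] := Hts t'.
    apply: Hno; exists p; split => //; exists (s + s'); split.
      exact: splus_add.
    by rewrite Hact //; [rewrite -Ht' | case: Hs].
move=> t; have [m [σ [Hm [Sσ Ht]]]] := claim (length ts) t ts (le_n _) (fun b Hb => proj1 Hb).
by exists m, σ.
Qed.
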